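(* Let $p,q\ge2$ with $q-1=d(p-1)$ for a positive integer $d$, and let $j_2:F(q)\to F(p)$ be the homomorphism with $j_2(x_i)=x_i^{d}$. Then $$j_2\circ\phi_q^{\,q-1}=\phi_p^{\,d(p-1)}\circ j_2.$$
   Context: For $r\ge2$, $F(r)$ is the group given by the presentation $\langle x_0,x_1,\dots\mid x_i^{-1}x_jx_i=x_{j+r-1}\ (i<j)\rangle$ (the group of piecewise-linear orientation-preserving homeomorphisms of $[0,1]$ with breakpoints in $\mathbb{Z}[1/r]$ and slopes powers of $r$). The shift map $\phi_r:F(r)\to F(r)$ is the endomorphism with $\phi_r(x_i)=x_{i+1}$ for all $i\ge0$. The assignment $x_i\mapsto x_i^d$ respects the relations and defines an injective homomorphism $j_2:F(q)\to F(p)$. *)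

(* Defs.v *)
From mathcomp Require Import all_boot monoid.
Set Implicit Arguments. Unset Strict Implicit. Unset Printing Implicit Defensive.
Local Open Scope group_scope.

Definition F_relations (r : nat) (G : groupType) (x : nat -> G) : Prop :=
  forall i j : nat, (i < j)%N -> (x i)^-1 * x j * x i = x (j + r.-1)%N.

(* (G, x) is a presentation of F(r) = < x_0, x_1, ... | x_i^{-1} x_j x_i = x_{j+r-1} (i<j) >:
   the x_i satisfy the relations and (G, x) is universal among groups with such elements
   (every assignment satisfying the relations extends to a unique homomorphism). *)
Definition is_F_presentation (r : nat) (G : groupType) (x : nat -> G) : Prop :=
  F_relations r x /\
  forall (H : groupType) (y : nat -> H), F_relations r y ->
    exists! f : G -> H, monoid_morphism f /\ forall i, f (x i) = y i.

(* Main.v *)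
Require Import Defs.
From mathcomp Require Import all_boot monoid.
Local Open Scope group_scope.

Section Aux.
Lemma mmV (G H : groupType) (f : G -> H) (x : G) :
  monoid_morphism f -> f x^-1 = (f x)^-1.
Proof.
move=> [f1 fM]; symmetry; apply: mulg1_eq.
by rewrite -fM mulgV f1.
Qed.

Lemma mmX (G H : groupType) (f : G -> H) (x : G) n :
  monoid_morphism f -> f (x ^+ n) = (f x) ^+ n.
Proof.
move=> [f1 fM]; elim: n => [|n IH]; first by rewrite !expg0 f1.
by rewrite !expgS fM IH.
Qed.

Lemma mmComp (G H K : groupType) (f : G -> H) (g : H -> K) :
  monoid_morphism f -> monoid_morphism g -> monoid_morphism (g \o f).
Proof.
move=> [f1 fM] [g1 gM]; split; first by rewrite /= f1 g1.
by move=> x y /=; rewrite fM gM.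
Qed.

Lemma mmIter (G : groupType) (f : G -> G) n :
  monoid_morphism f -> monoid_morphism (iter n f).
Proof.
move=> [f1 fM]; elim: n => [|n [IH1 IHM]]; first by split.
split; first by rewrite /= IH1 f1.
by move=> x y /=; rewrite IHM fM.
Qed.

Lemma iter_gen (G : groupType) (f : G -> G) (x : nat -> G) n i :
  (forall i, f (x i) = x i.+1) -> iter n f (x i) = x (i + n)%N.
Proof.
move=> hf; elim: n => [|n IH]; first by rewrite addn0.
by rewrite iterS IH hf addnS.
Qed.
End Aux.

Theorem proposition13 (p q d : nat) (hp : (2 <= p)%N) (hq : (2 <= q)%N) (hd : (0 < d)%N)
  (hqd : (q - 1 = d * (p - 1))%N)
  (Fp Fq : groupType) (xp : nat -> Fp) (xq : nat -> Fq)
  (HFp : is_F_presentation p xp) (HFq : is_F_presentation q xq)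
  (phi_p : Fp -> Fp) (phi_q : Fq -> Fq) (j2 : Fq -> Fp)
  (hphi_p : monoid_morphism phi_p /\ forall i, phi_p (xp i) = xp i.+1)
  (hphi_q : monoid_morphism phi_q /\ forall i, phi_q (xq i) = xq i.+1)
  (hj2 : monoid_morphism j2 /\ forall i, j2 (xq i) = xp i ^+ d) :
  j2 \o iter (q - 1) phi_q = iter (d * (p - 1)) phi_p \o j2.
Proof.
case: HFq => Rq Uq.
case: hphi_p => mp gp; case: hphi_q => mq gq; case: hj2 => mj gj.
set g := j2 \o iter (q - 1) phi_q.
set h := iter (d * (p - 1)) phi_p \o j2.
have mg : monoid_morphism g by apply: mmComp => //; apply: mmIter.
have mh : monoid_morphism h by apply: mmComp => //; apply: mmIter.
have Ry : F_relations q (fun i => g (xq i)).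
  move=> i j lij.
  by rewrite -mmV // -mg.2 -mg.2 Rq.
have [f [_ uf]] := Uq Fp (fun i => g (xq i)) Ry.
rewrite -(uf g) ?(uf h) //; split => // i.
rewrite /h /g /= gj (mmX _ _ _ _ _ (mmIter _ _ _ mp)) (iter_gen _ _ _ _ _ gp).
by rewrite (iter_gen _ _ _ _ _ gq) gj hqd.
Qed.
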